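(* With $f$ as defined in the context, for $b,c\in(-1,\infty)$ the quantity $f(b,c)$ is strictly decreasing in $b$ (for fixed $c$) and strictly increasing in $c$ (for fixed $b$).
   Context: Let $u_n=(-1)^{s_2(n)}$, where $s_2(n)$ is the sum of the binary digits of the non-negative integer $n$ (Thue–Morse sequence with values $\pm1$). For $b,c\in(-1,\infty)$ define $f(b,c)=\prod_{n=1}^\infty\left(\frac{n+b}{n+c}\right)^{u_n}$ (limit of partial products; it converges). *)

(* Defs.v *)
From Stdlib Require Import Reals Lra Lia.
From Coquelicot Require Import Coquelicot.
Open Scope R_scope.

Fixpoint s2_aux (fuel n : nat) : nat :=
  match fuel with
  | O => O
  | S f => match n with
           | O => O
           | _ => (Nat.modulo n 2 + s2_aux f (Nat.div n 2))%nat
           end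
  end.
Definition s2 (n : nat) : nat := s2_aux n n.

(* Thue--Morse sequence with values +-1: u_n = (-1)^{s_2(n)} *)
Definition u (n : nat) : R := (-1) ^ (s2 n).

(* factor ((n+b)/(n+c))^{u_n}, u_n = +-1 *)
Definition tm_factor (b c : R) (n : nat) : R :=
  if Nat.even (s2 n) then (INR n + b) / (INR n + c)
  else (INR n + c) / (INR n + b).

Fixpoint tm_partial (b c : R) (N : nat) : R :=
  match N with
  | O => 1
  | S m => tm_partial b c m * tm_factor b c (S m)
  end.

Definition tm_f (b c : R) : R := real (Lim_seq (tm_partial b c)).

(* Main.v *)
Require Import Defs.
From Stdlib Require Import Reals Lra Lia.
From Coquelicot Require Import Coquelicot.
Open Scope R_scope.

Lemma s2_aux_fuel : forall f1 f2 n, (n <= f1)%nat -> (n <= f2)%nat ->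
  s2_aux f1 n = s2_aux f2 n.
Proof.
  induction f1 as [|f1 IH]; intros f2 n H1 H2.
  - replace n with 0%nat by lia. destruct f2; reflexivity.
  - destruct f2 as [|f2].
    + replace n with 0%nat by lia. reflexivity.
    + destruct n as [|n']; [reflexivity|].
      simpl s2_aux. f_equal. apply IH.
      * pose proof (Nat.div_lt (S n') 2 ltac:(lia) ltac:(lia)). change (fst (Nat.divmod n' 1 0 0)) with (S n' / 2)%nat. lia.
      * pose proof (Nat.div_lt (S n') 2 ltac:(lia) ltac:(lia)). change (fst (Nat.divmod n' 1 0 0)) with (S n' / 2)%nat. lia.
Qed.

Lemma s2_unfold : forall n, (0 < n)%nat -> s2 n = (n mod 2 + s2 (n/2))%nat.
Proof.
  intros [|n] H; [lia|]. unfold s2 at 1. cbn [s2_aux].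
  f_equal. unfold s2. apply s2_aux_fuel.
  - pose proof (Nat.div_lt (S n) 2 ltac:(lia) ltac:(lia)). lia.
  - lia.
Qed.

Lemma s2_double : forall m r, (r < 2)%nat -> s2 (2*m + r) = (s2 m + r)%nat.
Proof.
  intros m r Hr.
  destruct (Nat.eq_dec (2*m+r) 0) as [E|E].
  - assert (m = 0%nat) by lia. assert (r = 0%nat) by lia. subst. reflexivity.
  - rewrite s2_unfold by lia.
    assert (Hd : ((2*m+r)/2 = m)%nat).
    { rewrite (Nat.mul_comm 2 m). rewrite Nat.div_add_l by lia.
      rewrite Nat.div_small by lia. lia. }
    assert (Hm : ((2*m+r) mod 2 = r)%nat).
    { rewrite (Nat.mul_comm 2 m). rewrite Nat.add_comm, Nat.Div0.mod_add. apply Nat.mod_small; lia. }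
    rewrite Hd, Hm. lia.
Qed.

Definition eps (n : nat) : R := if Nat.even (s2 n) then 1 else -1.

Lemma eps_double : forall m, eps (2*m) = eps m.
Proof. intro m. unfold eps. replace (2*m)%nat with (2*m+0)%nat by lia.
  rewrite s2_double by lia. rewrite Nat.add_0_r. reflexivity. Qed.

Lemma eps_double1 : forall m, eps (2*m+1) = - eps m.
Proof. intro m. unfold eps. rewrite s2_double by lia.
  rewrite Nat.add_1_r, Nat.even_succ, <- Nat.negb_even.
  destruct (Nat.even (s2 m)); simpl; lra. Qed.

Lemma eps_shift : forall K n, (n < 2^K)%nat -> eps (n + 2^K) = - eps n.
Proof.
  induction K as [|K IH]; intros n Hn.
  - simpl in Hn. replace n with 0%nat by lia. unfold eps. simpl.
    vm_compute. lra.
  - pose proof (Nat.div_mod_eq n 2) as Hdm.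
    pose proof (Nat.mod_upper_bound n 2 ltac:(lia)) as Hr.
    set (m := (n/2)%nat) in *. set (r := (n mod 2)%nat) in *.
    assert (Hm : (m < 2^K)%nat) by (rewrite Nat.pow_succ_r' in Hn; lia).
    assert (E1 : (n + 2^S K = 2*(m+2^K) + r)%nat) by (rewrite Nat.pow_succ_r'; lia).
    rewrite E1, Hdm.
    destruct (Nat.eq_dec r 0) as [R0|R0].
    + rewrite R0, !Nat.add_0_r, !eps_double. apply IH; lia.
    + replace r with 1%nat by lia. rewrite !eps_double1, IH by lia. reflexivity.
Qed.
Definition phi (b c x : R) : R := ln (x + b) - ln (x + c).

Fixpoint Sig (b c : R) (N : nat) : R :=
  match N with O => 0 | S m => Sig b c m + eps (S m) * phi b c (INR (S m)) end.

Lemma partial_exp : forall b c N, -1 < b -> -1 < c -> tm_partial b c N = exp (Sig b c N).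
Proof.
  intros b c N Hb Hc. induction N as [|N IH].
  - simpl. rewrite exp_0. reflexivity.
  - simpl tm_partial. cbn [Sig]. rewrite IH, exp_plus. f_equal.
    pose proof (pos_INR N) as HN. rewrite S_INR.
    assert (P1 : 0 < INR N + 1 + b) by lra. assert (P2 : 0 < INR N + 1 + c) by lra.
    unfold tm_factor, eps, phi. rewrite S_INR.
    destruct (Nat.even (s2 (S N))).
    + rewrite Rmult_1_l. unfold Rminus. rewrite exp_plus, exp_Ropp, !exp_ln by lra. reflexivity.
    + replace (-1 * (ln (INR N + 1 + b) - ln (INR N + 1 + c)))
        with (ln (INR N + 1 + c) - ln (INR N + 1 + b)) by ring.
      unfold Rminus. rewrite exp_plus, exp_Ropp, !exp_ln by lra. reflexivity.
Qed.

Fixpoint D (K : nat) (g : R -> R) (x : R) : R :=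
  match K with O => g x | S k => D k g x - D k g (x + 2 ^ k) end.

Fixpoint T (g : R -> R) (j : nat) (x : R) : R :=
  match j with O => 0 | S i => T g i x + eps i * g (x + INR i) end.

Lemma T_split : forall g K x j, (j <= 2^K)%nat ->
  T g (2^K + j) x = T g (2^K) x - T g j (x + 2^K).
Proof.
  intros g K x j. induction j as [|j IH]; intro Hj.
  - rewrite Nat.add_0_r. simpl. ring.
  - rewrite Nat.add_succ_r. cbn [T]. rewrite IH by lia.
    replace (2^K + j)%nat with (j + 2^K)%nat by lia.
    rewrite eps_shift by lia. rewrite plus_INR, pow_INR. replace (INR 2) with 2 by (simpl; ring).
    replace (x + (INR j + 2^K)) with (x + 2^K + INR j) by ring. ring.
Qed.

Lemma T_D : forall g K x, T g (2^K) x = D K g x.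
Proof.
  intros g K. induction K as [|K IH]; intro x.
  - change (T g 1 x = g x). cbn [T]. unfold eps. replace (s2 0) with 0%nat by reflexivity. simpl Nat.even. cbv iota. simpl INR. rewrite Rplus_0_r. ring.
  - replace (2 ^ S K)%nat with (2^K + 2^K)%nat by (rewrite Nat.pow_succ_r'; lia).
    rewrite T_split by lia. rewrite !IH. reflexivity.
Qed.

Lemma Sig_block : forall b c K Q j, S Q = (2^K)%nat -> (j <= 2^K)%nat ->
  Sig b c (Q + j) = Sig b c Q - T (phi b c) j (2^K).
Proof.
  intros b c K Q j HQ. induction j as [|j IH]; intro Hj.
  - rewrite Nat.add_0_r. simpl. ring.
  - rewrite Nat.add_succ_r. cbn [Sig T]. rewrite IH by lia.
    replace (S (Q + j)) with (j + 2^K)%nat by lia.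
    rewrite eps_shift by lia. rewrite plus_INR, pow_INR. replace (INR 2) with 2 by (simpl; ring).
    replace (INR j + 2^K) with (2^K + INR j) by ring. ring.
Qed.

Lemma Sig_double : forall b c K Q, S Q = (2^K)%nat ->
  Sig b c (2^(S K) - 1) = Sig b c Q - D K (phi b c) (2^K).
Proof.
  intros b c K Q HQ. rewrite <- T_D.
  replace (2^(S K) - 1)%nat with (Q + 2^K)%nat by (rewrite Nat.pow_succ_r'; lia).
  apply Sig_block; lia.
Qed.
Lemma D_ext : forall K g h x, (forall y, g y = h y) -> D K g x = D K h x.
Proof. induction K; intros g h x H; simpl; [apply H|rewrite !(IHK g h) by auto; reflexivity]. Qed.

Lemma D_scal : forall K g k x, D K (fun y => k * g y) x = k * D K g x.
Proof. induction K; intros g k x; simpl; [reflexivity|rewrite !IHK; ring]. Qed.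

Lemma D_shift : forall K g s x, D K (fun y => g (y + s)) x = D K g (x + s).
Proof. induction K; intros g s x; simpl; [reflexivity|rewrite !IHK].
  replace (x + 2^K + s) with (x + s + 2^K) by ring. reflexivity. Qed.

Lemma D_minus : forall K g h x, D K (fun y => g y - h y) x = D K g x - D K h x.
Proof. induction K; intros g h x; simpl; [reflexivity|rewrite !IHK; ring]. Qed.

Lemma D_derive : forall K g g' (al : R), (forall y, al < y -> is_derive g y (g' y)) ->
  forall x, al < x -> is_derive (D K g) x (D K g' x).
Proof.
  induction K as [|K IH]; intros g g' al Hg x Hx.
  - simpl. apply Hg; auto.
  - simpl.
    assert (H2 : 0 < 2^K) by (apply pow_lt; lra).
    assert (A1 := IH g g' al Hg x Hx).
    assert (A2 : is_derive (fun y => D K g (y + 2^K)) x (D K g' (x + 2^K))).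
    { assert (B := is_derive_comp (D K g) (fun y => y + 2^K) x (D K g' (x + 2^K)) 1
         (IH g g' al Hg (x + 2^K) ltac:(lra))).
      assert (C : is_derive (fun y : R => y + 2^K) x 1).
      { auto_derive; auto; ring. }
      specialize (B C). simpl in B. unfold scal in B; simpl in B. unfold mult in B; simpl in B.
      rewrite Rmult_1_l in B. exact B. }
    exact (is_derive_minus _ _ x _ _ A1 A2).
Qed.

Lemma decr_of_neg : forall f f' al, (forall y, al < y -> is_derive f y (f' y)) ->
  (forall y, al < y -> f' y < 0) -> forall y1 y2, al < y1 -> y1 < y2 -> f y2 < f y1.
Proof.
  intros f f' al Hd Hn y1 y2 H1 H2.
  destruct (MVT_gen f y1 y2 f') as [c [Hc E]].
  - intros x Hx. apply Hd. rewrite Rmin_left in Hx by lra. lra.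
  - intros x Hx. rewrite Rmin_left in Hx by lra.
    apply derivable_continuous_pt. exists (f' x). apply is_derive_Reals. apply Hd. lra.
  - rewrite Rmin_left, Rmax_right in Hc by lra.
    assert (f' c < 0) by (apply Hn; lra).
    assert (f' c * (y2 - y1) < 0) by (apply Rmult_neg_pos; lra) || nra.
    lra.
Qed.

Definition hp (m : nat) (y : R) : R := / y ^ (S m).

Lemma hp_derive : forall m y, 0 < y -> is_derive (hp m) y (- INR (S m) * hp (S m) y).
Proof.
  intros m y Hy. unfold hp. assert (Hp : y ^ m <> 0) by (apply pow_nonzero; lra).
  auto_derive.
  - apply Rmult_integral_contrapositive_currified; lra.
  - rewrite S_INR. change (match m with 0%nat => 1 | S _ => INR m + 1 end) with (INR (S m)). rewrite S_INR. simpl pow. field. split; lra.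
Qed.
Lemma dec_from_pos : forall K, (forall m y, 0 < y -> 0 < D K (hp m) y) ->
  forall m y1 y2, 0 < y1 -> y1 < y2 -> D K (hp m) y2 < D K (hp m) y1.
Proof.
  intros K HP m. apply (decr_of_neg _ (fun y => - INR (S m) * D K (hp (S m)) y) 0).
  - intros y Hy. rewrite <- D_scal. apply (D_derive K (hp m) _ 0); auto.
    intros z Hz. apply hp_derive; auto.
  - intros y Hy. specialize (HP (S m) y Hy). pose proof (pos_INR m). rewrite S_INR. nra.
Qed.

Lemma hp_pos : forall K m y, 0 < y -> 0 < D K (hp m) y.
Proof.
  induction K as [|K IH]; intros m y Hy.
  - simpl. unfold hp. apply Rinv_0_lt_compat. apply pow_lt. lra.
  - simpl. assert (0 < 2^K) by (apply pow_lt; lra).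
    pose proof (dec_from_pos K IH m y (y + 2^K) Hy ltac:(lra)). lra.
Qed.

Lemma phi_derive : forall a b x, a < b -> -a < x ->
  is_derive (phi b a) x (hp 0 (x + b) - hp 0 (x + a)).
Proof.
  intros a b x Hab Hx. unfold phi, hp. auto_derive.
  - lra.
  - simpl. field. lra.
Qed.

Lemma phiD_pos : forall a b K x, a < b -> -a < x -> 0 < D K (phi b a) x.
Proof.
  intros a b K x Hab Hx. destruct K as [|K].
  - simpl. unfold phi. assert (ln (x + a) < ln (x + b)) by (apply ln_increasing; lra). lra.
  - simpl. assert (0 < 2^K) by (apply pow_lt; lra).
    enough (D K (phi b a) (x + 2^K) < D K (phi b a) x) by lra.
    apply (decr_of_neg _ (fun y => D K (hp 0) (y + b) - D K (hp 0) (y + a)) (-a)); try lra.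
    + intros y Hy. 
      replace (D K (hp 0) (y + b) - D K (hp 0) (y + a)) with
        (D K (fun z => hp 0 (z + b) - hp 0 (z + a)) y)
        by (rewrite D_minus, (D_shift K (hp 0) b), (D_shift K (hp 0) a); reflexivity).
      apply (D_derive K (phi b a) _ (-a)); auto.
      intros z Hz. apply phi_derive; auto.
    + intros y Hy. pose proof (dec_from_pos K (fun m y H => hp_pos K m y H) 0 (y+a) (y+b)). lra.
Qed.
Lemma Sig_pow_bound : forall a b, -1 < a -> a < b ->
  forall K, Sig b a (2^(S K) - 1) <= - phi b a 1.
Proof.
  intros a b Ha Hab K. induction K as [|K IH].
  - simpl. unfold eps. replace (s2 1) with 1%nat by reflexivity. simpl. lra.
  - assert (HQ : S (2^(S K) - 1) = (2^(S K))%nat).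
    { pose proof (Nat.pow_nonzero 2 (S K) ltac:(lia)). lia. }
    rewrite (Sig_double b a (S K) _ HQ).
    assert (1 <= 2^(S K)) by (apply pow_R1_Rle; lra).
    pose proof (phiD_pos a b (S K) (2^(S K)) Hab ltac:(lra)). lra.
Qed.

Lemma ln_le_lin : forall y, 0 < y -> ln y <= y - 1.
Proof.
  intros y Hy. destruct (Req_dec (ln y) 0) as [E|E].
  - assert (Hy1 : y = exp (ln y)) by (rewrite exp_ln; auto). rewrite E, exp_0 in Hy1. lra.
  - pose proof (exp_ineq1 _ E). rewrite exp_ln in H by lra. lra.
Qed.

Lemma ln_diff_bound : forall p q m, 0 < m -> m <= p -> m <= q ->
  Rabs (ln p - ln q) <= Rabs (p - q) / m.
Proof.
  assert (W : forall p q m, 0 < m -> m <= p -> m <= q -> q <= p ->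
            Rabs (ln p - ln q) <= Rabs (p - q) / m).
  { intros p q m Hm Hp Hq Hqp.
    assert (E : ln p - ln q = ln (p / q)).
    { unfold Rdiv. rewrite ln_mult, ln_Rinv by (try apply Rinv_0_lt_compat; lra). ring. }
    assert (H0 : ln q <= ln p) by (apply ln_le; lra).
    rewrite !Rabs_right by lra.
    assert (H1 : ln (p/q) <= p/q - 1) by (apply ln_le_lin; apply Rdiv_lt_0_compat; lra).
    assert (H2 : p / q - 1 = (p - q) / q) by (field; lra).
    assert (H3 : (p - q) / q <= (p - q) / m).
    { unfold Rdiv. apply Rmult_le_compat_l; [lra|]. apply Rinv_le_contravar; lra. }
    lra. }
  intros p q m Hm Hp Hq. destruct (Rle_dec q p).
  - apply W; auto.
  - rewrite Rabs_minus_sym, (Rabs_minus_sym p). apply W; lra.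
Qed.
Lemma INR2 : INR 2 = 2. Proof. simpl. ring. Qed.
Lemma INR1 : INR 1 = 1. Proof. reflexivity. Qed.

Lemma abs_le : forall x y, Rabs x <= y -> -y <= x <= y.
Proof. intros x y H. unfold Rabs in H. destruct (Rcase_abs x); lra. Qed.

Lemma seq_conv : forall (W g : nat -> R), (forall k, 0 <= g k) ->
  (forall k, Rabs (W (S k) - W k) <= g k - g (S k)) -> is_lim_seq g 0 ->
  exists l : R, is_lim_seq W l.
Proof.
  intros W g Hg Hs Hl.
  assert (Lo : forall k, W 0%nat - g 0%nat <= W k - g k).
  { induction k as [|k IH]; [lra|].
    specialize (Hs k). apply abs_le in Hs. lra. }
  destruct (ex_finite_lim_seq_decr (fun k => W k + g k) (W 0%nat - g 0%nat)) as [lU HU].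
  - intro k. specialize (Hs k). apply abs_le in Hs. lra.
  - intro k. specialize (Lo k). specialize (Hg k). lra.
  - exists lU. apply is_lim_seq_ext with (fun k => (W k + g k) - g k).
    + intro; ring.
    + replace lU with (lU - 0) by ring. apply is_lim_seq_minus'; auto.
Qed.

Lemma even_odd : forall (u : nat -> R) (l : R),
  is_lim_seq (fun k => u (2*k+1)%nat) l -> is_lim_seq (fun k => u (2*k+2)%nat) l ->
  is_lim_seq u l.
Proof.
  intros u l H1 H2. apply is_lim_seq_spec in H1, H2. apply is_lim_seq_spec.
  intro e. destruct (H1 e) as [N1 HN1]. destruct (H2 e) as [N2 HN2].
  exists (2*(N1+N2)+2)%nat. intros n Hn.
  destruct (Nat.Even_or_Odd n) as [[k Hk]|[k Hk]].
  - replace n with (2*(k-1)+2)%nat by lia. apply HN2. lia.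
  - subst n. apply HN1. lia.
Qed.

Lemma Sig_S : forall b c n, Sig b c (S n) = Sig b c n + eps (S n) * phi b c (INR (S n)).
Proof. reflexivity. Qed.

Lemma Rabs_eps : forall n y, Rabs (eps n * y) = Rabs y.
Proof. intros n y. unfold eps. destruct (Nat.even (s2 n)).
  - rewrite Rmult_1_l. reflexivity.
  - rewrite Rabs_mult. replace (Rabs (-1)) with 1 by (unfold Rabs; destruct Rcase_abs; lra). ring. Qed.

Lemma g_lim : forall A, is_lim_seq (fun k => A / (INR k + 1)) 0.
Proof.
  intro A.
  assert (H1 : is_lim_seq (fun k => INR k + 1) p_infty).
  { apply is_lim_seq_ext with (fun k => INR (S k)). intro; apply S_INR.
    apply (is_lim_seq_incr_1 INR p_infty). apply is_lim_seq_INR. }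
  assert (H2 := is_lim_seq_inv _ _ H1 ltac:(discriminate)). simpl in H2.
  assert (H3 := is_lim_seq_scal_l _ A _ H2). simpl in H3. rewrite Rmult_0_r in H3.
  exact H3.
Qed.

Lemma Sig_conv : forall b c, -1 < b -> -1 < c -> exists l : R, is_lim_seq (Sig b c) l.
Proof.
  intros b c Hb Hc.
  set (g := fun k : nat => Rabs (b - c) / (INR k + 1)).
  assert (Hg0 : forall k, 0 <= g k).
  { intro k. unfold g. pose proof (pos_INR k). apply Rdiv_le_0_compat; [apply Rabs_pos|lra]. }
  assert (Hgl : is_lim_seq g 0) by apply g_lim.
  destruct (seq_conv (fun k => Sig b c (2*k+1)) g Hg0) as [l Hl]; auto.
  - intro k. pose proof (pos_INR k) as Hk.
    replace (2 * S k + 1)%nat with (S (S (2*k+1))) by lia.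
    rewrite !Sig_S.
    replace (S (S (2*k+1))) with (2 * S k + 1)%nat by lia.
    replace (S (2*k+1)) with (2 * S k)%nat by lia.
    rewrite eps_double, eps_double1.
    assert (E1 : INR (2 * S k) = 2 * INR k + 2) by (rewrite mult_INR, INR2, S_INR; ring).
    assert (E2 : INR (2 * S k + 1) = 2 * INR k + 3) by (rewrite plus_INR, mult_INR, INR2, INR1, S_INR; ring).
    rewrite E1, E2.
    replace (Sig b c (2 * k + 1) + eps (S k) * phi b c (2 * INR k + 2) +
             - eps (S k) * phi b c (2 * INR k + 3) - Sig b c (2 * k + 1))
      with (eps (S k) * (phi b c (2 * INR k + 2) - phi b c (2 * INR k + 3))) by ring.
    rewrite Rabs_eps. unfold phi.
    set (x := 2 * INR k + 2).
    replace (ln (x + b) - ln (x + c) - (ln (2 * INR k + 3 + b) - ln (2 * INR k + 3 + c)))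
      with (ln ((x + b) * (x + 1 + c)) - ln ((x + c) * (x + 1 + b))).
    2:{ unfold x. rewrite !ln_mult by lra.
        replace (2 * INR k + 2 + 1 + c) with (2 * INR k + 3 + c) by ring.
        replace (2 * INR k + 2 + 1 + b) with (2 * INR k + 3 + b) by ring. ring. }
    eapply Rle_trans.
    + apply (ln_diff_bound _ _ ((INR k + 1) * (INR k + 2))).
      * nra.
      * unfold x. apply Rmult_le_compat; lra.
      * unfold x. apply Rmult_le_compat; lra.
    + replace ((x + b) * (x + 1 + c) - (x + c) * (x + 1 + b)) with (b - c) by ring.
      unfold g. rewrite S_INR. apply Req_le. field. lra.
  - exists l. apply even_odd; auto.
    apply is_lim_seq_ext with (fun k => Sig b c (2*k+1) + eps (2*k+2) * phi b c (INR (2*k+2))).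
    + intro k. replace (2*k+2)%nat with (S (2*k+1)) by lia. reflexivity.
    + replace l with (l + 0) by ring. apply is_lim_seq_plus'; auto.
      apply is_lim_seq_le_le with (fun k => - g k) g.
      * intro k. pose proof (pos_INR k) as Hk.
        enough (Rabs (eps (2 * k + 2) * phi b c (INR (2 * k + 2))) <= g k)
          by (apply abs_le in H; lra).
        rewrite Rabs_eps. unfold phi, g.
        assert (E : INR (2*k+2) = 2 * INR k + 2) by (rewrite plus_INR, mult_INR, INR2; ring).
        rewrite E.
        eapply Rle_trans; [apply (ln_diff_bound _ _ (INR k + 1)); lra|].
        replace (2 * INR k + 2 + b - (2 * INR k + 2 + c)) with (b - c) by ring. lra.
      * replace (Finite 0) with (Finite (- 0)) by (f_equal; ring).
        apply is_lim_seq_opp in Hgl. simpl in Hgl. exact Hgl.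
      * exact Hgl.
Qed.
Lemma tm_f_eq : forall b c (l : R), -1 < b -> -1 < c -> is_lim_seq (Sig b c) l -> tm_f b c = exp l.
Proof.
  intros b c l Hb Hc Hl. unfold tm_f.
  rewrite (is_lim_seq_unique _ (exp l)); [reflexivity|].
  apply is_lim_seq_ext with (fun N => exp (Sig b c N)).
  - intro N. symmetry. apply partial_exp; auto.
  - apply is_lim_seq_continuous; auto.
    apply derivable_continuous_pt, derivable_pt_exp.
Qed.

Lemma lim_neg : forall a b (l : R), -1 < a -> a < b -> is_lim_seq (Sig b a) l -> l < 0.
Proof.
  intros a b l Ha Hab Hl.
  assert (Hs : is_lim_seq (fun K => Sig b a (2^(S K) - 1)) l).
  { apply (is_lim_seq_subseq (Sig b a) l (fun K => (2^(S K) - 1)%nat)); auto.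
    apply eventually_subseq. intro n.
    pose proof (Nat.pow_nonzero 2 (S n) ltac:(lia)).
    rewrite (Nat.pow_succ_r' 2 (S n)). lia. }
  assert (Hle := is_lim_seq_le _ _ _ _ (Sig_pow_bound a b Ha Hab) Hs (is_lim_seq_const (- phi b a 1))).
  simpl in Hle. unfold phi in Hle.
  assert (ln (1 + a) < ln (1 + b)) by (apply ln_increasing; lra). lra.
Qed.

Lemma Sig_lin : forall b1 b2 c N, Sig b2 c N - Sig b1 c N = Sig b2 b1 N.
Proof. intros. induction N as [|N IH]; simpl; [ring|]. rewrite <- IH. unfold phi. ring. Qed.

Lemma Sig_lin' : forall b c1 c2 N, Sig b c1 N - Sig b c2 N = Sig c2 c1 N.
Proof. intros. induction N as [|N IH]; simpl; [ring|]. rewrite <- IH. unfold phi. ring. Qed.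

Theorem theorem2 :
  (forall b1 b2 c : R, -1 < b1 -> b1 < b2 -> -1 < c -> tm_f b2 c < tm_f b1 c) /\
  (forall b c1 c2 : R, -1 < b -> -1 < c1 -> c1 < c2 -> tm_f b c1 < tm_f b c2).
Proof.
  split.
  - intros b1 b2 c H1 H12 Hc.
    destruct (Sig_conv b1 c) as [l1 L1]; try lra.
    destruct (Sig_conv b2 c) as [l2 L2]; try lra.
    destruct (Sig_conv b2 b1) as [l3 L3]; try lra.
    assert (E : l2 - l1 = l3).
    { assert (HH := is_lim_seq_minus' _ _ _ _ L2 L1).
      apply (is_lim_seq_ext _ _ _ (Sig_lin b1 b2 c)) in HH.
      assert (U := is_lim_seq_unique _ _ HH). rewrite (is_lim_seq_unique _ _ L3) in U.
      injection U. auto. }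
    pose proof (lim_neg b1 b2 l3 H1 H12 L3).
    rewrite (tm_f_eq b2 c l2), (tm_f_eq b1 c l1) by (assumption || lra).
    apply exp_increasing. lra.
  - intros b c1 c2 Hb H1 H12.
    destruct (Sig_conv b c1) as [l1 L1]; try lra.
    destruct (Sig_conv b c2) as [l2 L2]; try lra.
    destruct (Sig_conv c2 c1) as [l3 L3]; try lra.
    assert (E : l1 - l2 = l3).
    { assert (HH := is_lim_seq_minus' _ _ _ _ L1 L2).
      apply (is_lim_seq_ext _ _ _ (Sig_lin' b c1 c2)) in HH.
      assert (U := is_lim_seq_unique _ _ HH). rewrite (is_lim_seq_unique _ _ L3) in U.
      injection U. auto. }
    pose proof (lim_neg c1 c2 l3 H1 H12 L3).
    rewrite (tm_f_eq b c1 l1), (tm_f_eq b c2 l2) by (assumption || lra).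
    apply exp_increasing. lra.
Qed.
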